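(* Let $\mathcal{H}$ be a Hilbert space of dimension $d$ with $2\le d<\infty$ and let $\mathbf{W}=\{W_y:y\in Y\}$ be a unitary system on $\mathcal{H}$. (i) There is a unique maximal family $\mathcal{V}_{\mathbf{W}}=\{\mathbf{V}_\alpha:\alpha\in\Lambda\}$ of $\mathbf{W}$-MASS's such that $\mathbf{W}=\bigcup_{\alpha\in\Lambda}\mathbf{V}_\alpha$. If each $W_y$ in $\mathbf{W}$ has simple eigenvalues, then the $\mathbf{V}_\alpha$'s are mutually disjoint. (ii) Let $\mathbf{W}'$ be another unitary system on $\mathcal{H}$ and $\mathcal{V}_{\mathbf{W}'}=\{\mathbf{V}'_\beta:\beta\in\Lambda'\}$ the corresponding family of $\mathbf{W}'$-MASS's as in (i). Then for a unitary $V$ on $\mathcal{H}$, $\mathbf{W}$ is collectively unitarily equivalent to $\mathbf{W}'$ via $V$ if and only if there is a bijection $\alpha\mapsto\alpha'$ from $\Lambda$ onto $\Lambda'$ such that $\mathbf{V}_\alpha$ is collectively unitarily equivalent to $\mathbf{V}'_{\alpha'}$ via $V$ for every $\alpha\in\Lambda$.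
   Context: A unitary system (US) on $\mathcal{H}$ is a nonempty set $\mathbf{W}=\{W_y:y\in Y\}$ of unitary operators on $\mathcal{H}$ with $\operatorname{tr}W_y=0$ and $\operatorname{tr}(W_x^*W_y)=d\,\delta_{xy}$ for $x,y\in Y$. An abelian unitary system (AUS) is a unitary system whose members pairwise commute. A maximal abelian subsystem of $\mathbf{W}$ ($\mathbf{W}$-MASS) is a subset of $\mathbf{W}$ which is an AUS and is maximal (under inclusion) with this property. For sets $\mathcal{F},\mathcal{G}$ of operators on $\mathcal{H}$ and a unitary $V$, $\mathcal{F}$ is collectively unitarily equivalent to $\mathcal{G}$ via $V$ if $\mathcal{G}=\{V^*AV: A\in\mathcal{F}\}$. *)

(* Defs.v *)
From HB Require Import structures.
From mathcomp Require Import all_boot all_order all_algebra.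
From mathcomp Require Import boolp classical_sets.
Set Implicit Arguments. Unset Strict Implicit. Unset Printing Implicit Defensive.
Import Order.TTheory GRing.Theory Num.Theory.
Local Open Scope ring_scope.
Local Open Scope classical_set_scope.

(* Operators on a d-dimensional Hilbert space = d x d matrices over an
   algebraically closed numeric field C (e.g. the complex numbers),
   in the standard orthonormal basis. *)

Section Defs.
Variables (C : numClosedFieldType) (d : nat).
Local Notation mx := 'M[C]_d.

Definition adjmx (A : mx) : mx := (map_mx Num.conj A)^T.

Definition unitary (U : mx) : Prop :=
  adjmx U *m U = 1%:M /\ U *m adjmx U = 1%:M.

Definition unitary_system (W : set mx) : Prop :=
  W !=set0 /\
  (forall U, W U -> unitary U /\ \tr U = 0) /\
  (forall U V, W U -> W V -> \tr (adjmx U *m V) = (d%:R * (U == V)%:R)).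

Definition abelian_unitary_system (W : set mx) : Prop :=
  unitary_system W /\ (forall U V, W U -> W V -> U *m V = V *m U).

Definition is_MASS (W S : set mx) : Prop :=
  S `<=` W /\ abelian_unitary_system S /\
  (forall T, S `<=` T -> T `<=` W -> abelian_unitary_system T -> T = S).

Definition fam_union (F : set (set mx)) : set mx :=
  fun A => exists2 S, F S & S A.

Definition MASS_cover (W : set mx) (F : set (set mx)) : Prop :=
  (forall S, F S -> is_MASS W S) /\ fam_union F = W.

Definition max_MASS_cover (W : set mx) (F : set (set mx)) : Prop :=
  MASS_cover W F /\ (forall G, MASS_cover W G -> G `<=` F).

Definition coll_unit_equiv (F G : set mx) (V : mx) : Prop :=
  G = (fun A => adjmx V *m A *m V) @` F.

Definition simple_eigenvalues (U : mx) : Prop :=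
  forall a : C, (mup a (char_poly U) <= 1)%N.

End Defs.

(* Main.v *)
Require Import Defs.
From HB Require Import structures.
From mathcomp Require Import all_boot all_order all_algebra zify.
From mathcomp Require Import boolp classical_sets.
Import Order.TTheory GRing.Theory Num.Theory.
Local Open Scope ring_scope.
Local Open Scope classical_set_scope.

Lemma uniq_count1 (T : eqType) (s : seq T) :
  (forall x, (count_mem x s <= 1)%N) -> uniq s.
Proof.
elim: s => //= y s IH H; apply/andP; split.
  have := H y; rewrite eqxx add1n ltnS leqn0 => /eqP.
  by move/count_memPn.
apply: IH => x; have := H x.
by case: (y == x); rewrite ?add1n ?add0n // ltnS leqn0 => /eqP ->.
Qed.

Lemma comm_simple (F : closedFieldType) n (U A B : 'M[F]_n) :
  (forall a, (mup a (char_poly U) <= 1)%N) ->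
  A *m U = U *m A -> B *m U = U *m B -> A *m B = B *m A.
Proof.
move=> Hs cA cB.
have [rs Hrs] := closed_field_poly_normal (char_poly U).
move: Hrs; rewrite (monicP (char_poly_monic U)) scale1r => Hcp.
have urs : uniq rs.
  by apply: uniq_count1 => x; rewrite -mu_prod_XsubC -Hcp.
have srs : size rs = n.
  have := size_char_poly U; rewrite Hcp size_prod_XsubC; by case.
pose E (i : 'I_(size rs)) := eigenspace U rs`_i.
have Enz i : (1 <= \rank (E i))%N.
  rewrite lt0n mxrank_eq0; have := eigenvalue_root_char U rs`_i.
  rewrite /eigenvalue => ->; rewrite Hcp root_prod_XsubC mem_nth //.
have dE : mxdirect (\sum_i E i).
  apply: mxdirect_sum_eigenspace => i j _ _ /eqP; rewrite nth_uniq // => /eqP.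
  exact: val_inj.
have rk : \rank (\sum_i E i) = (\sum_i \rank (E i))%N by apply/mxdirectP.
have rkle : (\sum_i \rank (E i) <= n)%N by rewrite -rk rank_leq_col.
have E1 i : \rank (E i) = 1%N.
  apply/eqP; rewrite eqn_leq Enz andbT.
  move: rkle; rewrite (bigD1 i) //=.
  have : (\sum_(j | j != i) 1 <= \sum_(j | j != i) \rank (E j))%N.
    by apply: leq_sum => j _; apply: Enz.
  rewrite sum1_card cardC1 card_ord => H1 H2.
  have n0 : (0 < size rs)%N by case: (size rs) i {H1 H2} => // [[]].
  move: H1 H2; move: (\sum_(j | j != i) \rank (E j)) => S; lia.
have EK i : (E i <= kermx (A *m B - B *m A))%MS.
  apply/row_subP => k; set v := row k (E i); apply/sub_kermxP.
  have vE : (v <= E i)%MS by apply: row_sub.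
  have [->|vnz] := eqVneq v 0; first by rewrite mul0mx.
  have Ev : (E i <= v)%MS.
    by rewrite -(mxrank_leqif_sup vE).2 rank_rV vnz E1.
  have stA : (v *m A <= v)%MS.
    apply: submx_trans Ev; apply: submx_trans (comm_mx_stable_eigenspace _ _).
      by apply: submxMr.
    by rewrite /comm_mx cA.
  have stB : (v *m B <= v)%MS.
    apply: submx_trans Ev; apply: submx_trans (comm_mx_stable_eigenspace _ _).
      by apply: submxMr.
    by rewrite /comm_mx cB.
  have [a ha] := sub_rVP stA; have [b hb] := sub_rVP stB.
  by rewrite mulmxBr !mulmxA ha hb -!scalemxAl ha hb !scalerA mulrC subrr.
have full : (1%:M <= \sum_i E i)%MS.
  rewrite sub1mx /row_full rk (eq_bigr (fun _ => 1%N)) ?sum1_card ?card_ord ?srs //.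
have : (1%:M <= kermx (A *m B - B *m A))%MS.
  by apply: submx_trans full _; apply/sumsmx_subP => i _; apply: EK.
by move/sub_kermxP; rewrite mul1mx => /eqP; rewrite subr_eq0 => /eqP.
Qed.

Set Implicit Arguments.
Section Main.
Variables (C : numClosedFieldType) (d : nat).
Local Notation mx := 'M[C]_d.

Definition commuting (X : set mx) :=
  forall U V, X U -> X V -> U *m V = V *m U.

Lemma sub_us (W X : set mx) : unitary_system W -> X `<=` W -> X !=set0 ->
  unitary_system X.
Proof.
move=> [_ [H1 H2]] XW Xn; split => //; split.
  by move=> U /XW; apply: H1.
by move=> U V /XW XU /XW XV; apply: H2.
Qed.

Lemma aus_sub (W X : set mx) : unitary_system W -> X `<=` W -> X !=set0 ->
  commuting X -> abelian_unitary_system X.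
Proof. by move=> uW XW Xn cX; split => //; apply: sub_us uW XW Xn. Qed.

Lemma exists_MASS (W : set mx) U : unitary_system W -> W U ->
  exists S, is_MASS W S /\ S U.
Proof.
move=> uW WU.
pose P (X : set mx) := X `<=` W /\ commuting (X `|` [set U]).
have [|A [[AW cA] Amax]] := @Zorn_bigcup _ P.
  move=> F FP tF; split.
    by move=> x [X FX Xx]; have [+ _] := FP X FX; apply.
  have key : forall X Y x y, F X -> F Y -> X x -> Y y -> x *m y = y *m x.
    move=> X Y x y FX FY Xx Yy; have [XY|YX] := tF X Y FX FY.
      by have [_ c] := FP Y FY; apply: c; left => //; apply: XY.
    by have [_ c] := FP X FX; apply: c; left => //; apply: YX.
  have keyU : forall X x, F X -> X x -> x *m U = U *m x.
    by move=> X x FX Xx; have [_ c] := FP X FX; apply: c; [left|right].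
  move=> x y [[X FX Xx]|->] [[Y FY Yy]|->] //.
  - exact: key FX FY Xx Yy.
  - exact: keyU FX Xx.
  - by rewrite (keyU _ _ FY Yy).
pose S := A `|` [set U].
have SW : S `<=` W by move=> x [/AW|->].
exists S; split; last by right.
split => //; split; first by apply: aus_sub uW SW _ cA; exists U; right.
move=> T ST TW [uT cT].
have AT : A `<=` T by move=> x Ax; apply: ST; left.
have [TA|nTA] := pselect (T `<=` A).
  by rewrite eqEsubset; split => // x /TA Ax; left.
exfalso; apply: (Amax T) => //; split => // x y.
have UT : T U by apply: ST; right.
by move=> [Tx|->] [Ty|->]; apply: cT.
Qed.

Lemma MASS_cover_all (W : set mx) : unitary_system W -> MASS_cover W (is_MASS W).
Proof.
move=> uW; split => //; rewrite eqEsubset; split.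
  by move=> x [S [SW _] Sx]; apply: SW.
by move=> x Wx; have [S [mS Sx]] := @exists_MASS W x uW Wx; exists S.
Qed.

Lemma max_cover_eq (W : set mx) F : unitary_system W -> max_MASS_cover W F ->
  F = is_MASS W.
Proof.
move=> uW [[FM _] Fmax]; rewrite eqEsubset; split => //.
exact: Fmax (MASS_cover_all uW).
Qed.

Lemma adjmxM (A B : mx) : adjmx (A *m B) = adjmx B *m adjmx A.
Proof. by rewrite /adjmx map_mxM trmx_mul. Qed.

Lemma adjmxK (A : mx) : adjmx (adjmx A) = A.
Proof. by apply/matrixP => i j; rewrite !mxE conjCK. Qed.

Lemma adjmx1 : adjmx (1%:M : mx) = 1%:M.
Proof. by rewrite /adjmx map_mx1 trmx1. Qed.

Definition cj (V A : mx) := adjmx V *m A *m V.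

Lemma unitary_adj (V : mx) : unitary V -> unitary (adjmx V).
Proof. by move=> [h1 h2]; split; rewrite adjmxK. Qed.

Section Cj.
Variable V : mx.
Hypothesis uV : unitary V.

Lemma cjM A B : cj V A *m cj V B = cj V (A *m B).
Proof.
case: uV => h1 h2.
by rewrite /cj !mulmxA -[adjmx V *m A *m V *m adjmx V]mulmxA h2 mulmx1.
Qed.

Lemma cj1 : cj V 1%:M = 1%:M.
Proof. by case: uV => h1 h2; rewrite /cj mulmx1. Qed.

Lemma cj_adj A : adjmx (cj V A) = cj V (adjmx A).
Proof. by rewrite /cj !adjmxM adjmxK mulmxA. Qed.

Lemma cj_tr A : \tr (cj V A) = \tr A.
Proof.
case: uV => h1 h2.
by rewrite /cj mxtrace_mulC mulmxA h2 mul1mx.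
Qed.

Lemma cjK A : cj (adjmx V) (cj V A) = A.
Proof.
case: uV => h1 h2.
by rewrite /cj adjmxK !mulmxA h2 mul1mx -mulmxA h2 mulmx1.
Qed.

Lemma cj_inj : injective (cj V).
Proof. by move=> A B /(congr1 (cj (adjmx V))); rewrite !cjK. Qed.

Lemma us_cj (X : set mx) : unitary_system X -> unitary_system (cj V @` X).
Proof.
move=> [[U XU] [H1 H2]]; split; first by exists (cj V U); exists U.
split.
  move=> _ [A XA <-]; have [[a1 a2] a3] := H1 A XA.
  by split; [split|]; rewrite ?cj_tr // cj_adj cjM ?a1 ?a2 cj1.
move=> _ _ [A XA <-] [B XB <-].
by rewrite cj_adj cjM cj_tr H2 // (inj_eq cj_inj).
Qed.

Lemma comm_cj (X : set mx) : commuting X -> commuting (cj V @` X).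
Proof. by move=> cX _ _ [A XA <-] [B XB <-]; rewrite !cjM cX. Qed.

Lemma aus_cj (X : set mx) : abelian_unitary_system X ->
  abelian_unitary_system (cj V @` X).
Proof. by move=> [u c]; split; [apply: us_cj | apply: comm_cj]. Qed.

End Cj.

Lemma image_cjK (V : mx) (T : set mx) : unitary V ->
  cj V @` (cj (adjmx V) @` T) = T.
Proof.
move=> uV; rewrite eqEsubset; split.
  by move=> _ [_ [y Ty <-] <-]; rewrite -{1}(adjmxK V) cjK ?adjmxK //; apply: unitary_adj.
move=> x Tx; exists (cj (adjmx V) x); first by exists x.
by rewrite -{1}(adjmxK V) cjK //; apply: unitary_adj.
Qed.

Lemma image_cjK' (V : mx) (T : set mx) : unitary V ->
  cj (adjmx V) @` (cj V @` T) = T.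
Proof.
move=> uV; have H := image_cjK T (unitary_adj uV); rewrite adjmxK in H; exact: H.
Qed.

Lemma image_sub (f : mx -> mx) (A B : set mx) : A `<=` B -> f @` A `<=` f @` B.
Proof. by move=> AB _ [x Ax <-]; exists x => //; apply: AB. Qed.

Lemma MASS_cj (V : mx) (W S : set mx) : unitary V ->
  is_MASS W S -> is_MASS (cj V @` W) (cj V @` S).
Proof.
move=> uV [SW [aS Smax]]; split; first exact: image_sub.
split; first exact: aus_cj.
move=> T ST TW aT.
have uV' := unitary_adj uV.
have E : cj (adjmx V) @` T = S.
  apply: Smax.
  - by rewrite -[X in X `<=` _](image_cjK' S uV); apply: image_sub.
  - by rewrite -[X in _ `<=` X](image_cjK' W uV); apply: image_sub.
  - exact: aus_cj.
by rewrite -E image_cjK.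
Qed.

Lemma MASS_cj_iff (V : mx) (W S : set mx) : unitary V ->
  is_MASS (cj V @` W) S <-> is_MASS W (cj (adjmx V) @` S).
Proof.
move=> uV; split => h.
  by rewrite -(image_cjK' W uV); apply: MASS_cj => //; apply: unitary_adj.
by rewrite -(image_cjK S uV); apply: MASS_cj.
Qed.

End Main.
Unset Implicit Arguments.
Arguments commuting {C d}.
Arguments cj {C d}.

Theorem theorem2p8 (C : numClosedFieldType) (d : nat) (W : set 'M[C]_d) :
  (2 <= d)%N -> unitary_system W ->
  (* (i) existence and uniqueness of the maximal family of W-MASS's covering W *)
  (exists F : set (set 'M[C]_d),
     max_MASS_cover W F /\ (forall F', max_MASS_cover W F' -> F' = F)) /\
  (* (i) disjointness under simple eigenvalues *)
  (forall F : set (set 'M[C]_d), max_MASS_cover W F ->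
     (forall U, W U -> simple_eigenvalues U) ->
     forall S T, F S -> F T -> S <> T -> S `&` T = set0) /\
  (* (ii) *)
  (forall (W' : set 'M[C]_d) (F F' : set (set 'M[C]_d)) (V : 'M[C]_d),
     unitary_system W' -> max_MASS_cover W F -> max_MASS_cover W' F' ->
     unitary V ->
     (coll_unit_equiv W W' V <->
      exists f : set 'M[C]_d -> set 'M[C]_d,
        [/\ (forall S, F S -> F' (f S)),
            (forall S T, F S -> F T -> f S = f T -> S = T),
            (forall S', F' S' -> exists2 S, F S & f S = S') &
            (forall S, F S -> coll_unit_equiv S (f S) V)])).
Proof.
move=> _ uW; split.
  exists (is_MASS W); split; last by move=> F' mF'; apply: max_cover_eq.
  by split; [apply: MASS_cover_all | move=> G [GM _]].
split.
  move=> F mF simple S T; rewrite (max_cover_eq uW mF) => mS mT nST.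
  apply/seteqP; split => // U [SU TU]; exfalso.
  have WU : W U by case: mS => + _; apply.
  have cS : commuting S by case: mS => _ [[_ c] _].
  have cT : commuting T by case: mT => _ [[_ c] _].
  have cU : forall X, S X \/ T X -> X *m U = U *m X.
    by move=> X [SX|TX]; [apply: cS | apply: cT].
  have cST : commuting (S `|` T).
    move=> X Y hX hY; have h : forall a, (mup a (char_poly U) <= 1)%N := simple U WU.
    by apply: (@comm_simple _ _ U X Y h); apply: cU.
  have STW : S `|` T `<=` W.
    by move=> x [Sx|Tx]; [case: mS => + _; apply | case: mT => + _; apply].
  have aST : abelian_unitary_system (S `|` T).
    by apply: aus_sub uW STW _ cST; exists U; left.
  case: mS => _ [_ Smax]; case: mT => _ [_ Tmax].
  have E1 : S `|` T = S := Smax _ (fun x h => or_introl h) STW aST.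
  have E2 : S `|` T = T := Tmax _ (fun x h => or_intror h) STW aST.
  by apply: nST; exact: etrans (esym E1) E2.
move=> W' F F' V uW' mF mF' uV.
have EF := max_cover_eq uW mF; have EF' := max_cover_eq uW' mF'.
split.
  rewrite /coll_unit_equiv => EW; exists (fun S => cj V @` S); split.
  - by move=> S; rewrite EF EF' EW; apply: MASS_cj.
  - move=> S T _ _ /(congr1 (fun X => cj (adjmx V) @` X)).
    by rewrite !image_cjK'.
  - move=> S'; rewrite EF EF' EW => mS'; exists (cj (adjmx V) @` S').
      by apply/MASS_cj_iff.
    by rewrite image_cjK.
  - by [].
move=> [f [fF finj fsurj fcu]]; rewrite /coll_unit_equiv.
case: mF => [[_ UF] _]; case: mF' => [[_ UF'] _].
rewrite -UF -UF' eqEsubset; split.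
  move=> x [S' F'S' S'x]; have [S FS fS] := fsurj S' F'S'.
  move: S'x; rewrite -fS (fcu S FS) => -[y Sy <-].
  by exists y => //; exists S.
move=> _ [y [S FS Sy] <-]; exists (f S); first by apply: fF.
by rewrite (fcu S FS); exists y.
Qed.
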